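(* Let $(x_n)$ be a nonincreasing interval-filling sequence of positive reals with cardinal function $f$, and suppose $r_k>x_k$ for some $k\in\mathbb{N}$. Then there exists $x\in\mathcal{A}((x_n))$ with $f(x)\ge3$ (with $\omega,\mathfrak{c}$ counting as $\ge3$).
   Context: For a summable sequence $\mathbf{x}=(x_n)$ of positive reals, $\mathcal{A}(\mathbf{x})=\{\sum_{n\in A}x_n: A\subseteq\mathbb{N}\}$ is its achievement set and its cardinal function $f$ assigns to $x\in\mathcal{A}(\mathbf{x})$ the cardinality (a positive integer, $\omega$, or $\mathfrak{c}$) of $\{(\varepsilon_n)\in\{0,1\}^{\mathbb{N}}:\sum\varepsilon_nx_n=x\}$. The sequence is interval-filling if $\mathcal{A}(\mathbf{x})$ is an interval. The tail sums are $r_n=\sum_{k=n+1}^\infty x_k$. *)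

(* Defs.v *)
From Stdlib Require Import Reals.
From Coquelicot Require Import Coquelicot.
Open Scope R_scope.

Definition subseries (x : nat -> R) (eps : nat -> bool) : nat -> R :=
  fun n => if eps n then x n else 0.

Definition represents (x : nat -> R) (eps : nat -> bool) (y : R) : Prop :=
  is_series (subseries x eps) y.

Definition achievement_set (x : nat -> R) (y : R) : Prop :=
  exists eps : nat -> bool, represents x eps y.

Definition interval_filling (x : nat -> R) : Prop :=
  forall a b c, achievement_set x a -> achievement_set x b ->
    a <= c <= b -> achievement_set x c.

Definition tail_sum (x : nat -> R) (n : nat) : R :=
  Series (fun j => x (j + S n)%nat).

(* Main.v *)
Require Import Defs.
From Stdlib Require Import Reals Lra Lia Classical.
From Coquelicot Require Import Coquelicot.
Open Scope R_scope.

Lemma ser_lim (a : nat -> R) (l : R) : is_series a l -> is_lim_seq (sum_n a) l.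
Proof. intro H. exact H. Qed.
Lemma lim_ser (a : nat -> R) (l : R) : is_lim_seq (sum_n a) l -> is_series a l.
Proof. intro H. exact H. Qed.

Lemma sum_n_mono (a : nat -> R) (Ha : forall i, 0 <= a i) N M :
  (N <= M)%nat -> sum_n a N <= sum_n a M.
Proof.
  induction 1. lra. rewrite sum_Sn. change (plus (sum_n a m) (a (S m))) with (sum_n a m + a (S m)).
  specialize (Ha (S m)). lra.
Qed.

Lemma sum_n_nonneg (a : nat -> R) (Ha : forall i, 0 <= a i) N : 0 <= sum_n a N.
Proof.
  induction N. rewrite sum_O. auto. rewrite sum_Sn.
  change (plus (sum_n a N) (a (S N))) with (sum_n a N + a (S N)). specialize (Ha (S N)). lra.
Qed.

Lemma psum_le (a : nat -> R) (Ha : forall i, 0 <= a i) l N :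
  is_series a l -> sum_n a N <= l.
Proof.
  intro H. apply ser_lim in H.
  assert (H2 := is_lim_seq_le_loc (fun _ => sum_n a N) (sum_n a) (sum_n a N) l).
  simpl in H2. apply H2; auto. exists N. intros. apply sum_n_mono; auto.
  apply is_lim_seq_const.
Qed.

Lemma term_le_sum (a : nat -> R) (Ha : forall i, 0 <= a i) i : a i <= sum_n a i.
Proof.
  destruct i. rewrite sum_O. lra. rewrite sum_Sn.
  change (plus (sum_n a i) (a (S i))) with (sum_n a i + a (S i)).
  pose proof (sum_n_nonneg a Ha i). lra.
Qed.

Lemma pm_series j c : is_series (fun i => if Nat.eqb i j then c else 0) c.
Proof.
  apply lim_ser.
  assert (E : forall N, (j <= N)%nat -> sum_n (fun i => if Nat.eqb i j then c else 0) N = c).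
  { intros N HN. induction HN.
    - destruct j. rewrite sum_O. reflexivity.
      rewrite sum_Sn. rewrite Nat.eqb_refl.
      assert (Z : forall M, (M < S j)%nat -> sum_n (fun i => if Nat.eqb i (S j) then c else 0) M = 0).
      { induction M; intros. rewrite sum_O. reflexivity. rewrite sum_Sn, IHM by lia.
        destruct (Nat.eqb_spec (S M) (S j)). lia. change (0 + 0 = 0). ring. }
      rewrite Z by lia. change (0 + c = c). ring.
    - rewrite sum_Sn, IHHN. destruct (Nat.eqb_spec (S m) j). lia. change (c + 0 = c). ring. }
  apply is_lim_seq_ext_loc with (fun _ => c). exists j. intros. symmetry. auto.
  apply is_lim_seq_const.
Qed.

Definition upd (e : nat -> bool) (j : nat) : nat -> bool :=
  fun i => if Nat.eqb i j then true else e i.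

Lemma rep_upd x e a j : represents x e a -> e j = false ->
  represents x (upd e j) (a + x j).
Proof.
  unfold represents. intros H Hj.
  apply is_series_ext with (fun i => plus (subseries x e i) (if Nat.eqb i j then x j else 0)).
  - intro i. unfold upd, subseries. destruct (Nat.eqb_spec i j).
    + subst. rewrite Hj. change (0 + x j = x j). ring.
    + change ((if e i then x i else 0) + 0 = (if e i then x i else 0)). ring.
  - exact (is_series_plus _ _ _ _ H (pm_series j (x j))).
Qed.

Lemma rep_zero x : represents x (fun _ => false) 0.
Proof.
  unfold represents. apply is_series_ext with (fun i => if Nat.eqb i 0 then 0 else 0).
  intro i. unfold subseries. destruct (Nat.eqb i 0); reflexivity. apply pm_series.
Qed.

Definition T (x : nat -> R) n := Series x - sum_n x n.

Lemma tail_eq (x : nat -> R) (hs : ex_series x) n : tail_sum x n = T x n.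
Proof.
  unfold tail_sum, T. apply is_series_unique.
  apply is_series_ext with (fun k => x (S n + k)%nat).
  { intro k. f_equal. lia. }
  apply is_series_incr_n. lia. simpl Nat.pred.
  match goal with |- is_series _ ?L => replace L with (Series x) end.
  apply Series_correct; auto. change (Series x = Series x - sum_n x n + sum_n x n). ring.
Qed.

Lemma T_S (x : nat -> R) n : T x (S n) = T x n - x (S n).
Proof. unfold T. rewrite sum_Sn. change (Series x - (sum_n x n + x (S n)) = Series x - sum_n x n - x (S n)). ring. Qed.

Lemma T_lim (x : nat -> R) (hs : ex_series x) : is_lim_seq (T x) 0.
Proof.
  assert (H := is_lim_seq_minus' _ _ _ _ (is_lim_seq_const (Series x)) (ser_lim _ _ (Series_correct _ hs))).
  rewrite Rminus_eq_0 in H. exact H.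
Qed.

Lemma T_nonneg (x : nat -> R) (hpos : forall n, 0 < x n) (hs : ex_series x) n : 0 <= T x n.
Proof.
  unfold T. assert (sum_n x n <= Series x).
  apply psum_le. intro i. left; auto. apply Series_correct; auto. lra.
Qed.

Fixpoint acc (x : nat -> R) (m : nat) (z : R) (i : nat) : R :=
  match i with
  | O => 0
  | S i' => let a := acc x m z i' in
      if (Nat.ltb m i' && (if Rle_dec (a + x i') z then true else false))%bool
      then a + x i' else a
  end.

Definition gr (x : nat -> R) m z i : bool :=
  (Nat.ltb m i && (if Rle_dec (acc x m z i + x i) z then true else false))%bool.

Lemma acc_S (x : nat -> R) m z i : acc x m z (S i) = acc x m z i + subseries x (gr x m z) i.
Proof. simpl. unfold subseries, gr. destruct (_ && _)%bool; ring. Qed.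

Lemma sum_acc (x : nat -> R) m z N : sum_n (subseries x (gr x m z)) N = acc x m z (S N).
Proof.
  induction N. rewrite sum_O, acc_S. simpl acc. rewrite Rplus_0_l. reflexivity.
  rewrite sum_Sn, IHN, (acc_S x m z (S N)). reflexivity.
Qed.

Lemma gr_low (x : nat -> R) m z i : (i <= m)%nat -> gr x m z i = false.
Proof. intro H. unfold gr. destruct (Nat.ltb_spec m i). lia. reflexivity. Qed.

Lemma acc_le (x : nat -> R) m z (hz : 0 <= z) i : acc x m z i <= z.
Proof.
  induction i. simpl. auto. rewrite acc_S. unfold subseries, gr.
  destruct (Nat.ltb m i); simpl. destruct (Rle_dec (acc x m z i + x i) z); lra. lra.
Qed.

Lemma acc_low (x : nat -> R) m z i : (i <= S m)%nat -> acc x m z i = 0.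
Proof.
  induction i; intros. reflexivity. rewrite acc_S, IHi by lia.
  unfold subseries. rewrite gr_low by lia. ring.
Qed.

Lemma greedy (x : nat -> R) (hpos : forall n, 0 < x n) (hs : ex_series x)
  (hk : forall n, x n <= T x n) m z :
  0 <= z <= T x m -> represents x (gr x m z) z /\ (forall i, (i <= m)%nat -> gr x m z i = false).
Proof.
  intros [hz0 hz]. split; [|apply gr_low].
  assert (Inv : forall i, (m <= i)%nat -> z - acc x m z (S i) <= T x i).
  { induction 1.
    - rewrite acc_low by lia. lra.
    - rewrite (acc_S x m z (S m0)), T_S. unfold subseries, gr.
      destruct (Nat.ltb_spec m (S m0)); [|lia]. cbn [andb].
      destruct (Rle_dec (acc x m z (S m0) + x (S m0)) z).
      + lra.
      + specialize (hk (S m0)). rewrite T_S in hk. lra. }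
  unfold represents. apply lim_ser.
  apply is_lim_seq_le_le_loc with (fun N => z - T x N) (fun _ => z).
  - exists m. intros N HN. rewrite sum_acc. split. specialize (Inv N HN). lra.
    apply acc_le; auto.
  - replace (Finite z) with (Finite (z - 0)) by (f_equal; ring).
    apply is_lim_seq_minus'. apply is_lim_seq_const. apply T_lim; auto.
  - apply is_lim_seq_const.
Qed.

Lemma noninc_le (x : nat -> R) (hnoninc : forall n, x (S n) <= x n) i j : (i <= j)%nat -> x j <= x i.
Proof. induction 1. lra. specialize (hnoninc m). lra. Qed.

Lemma kakeya (x : nat -> R) (hpos : forall n, 0 < x n) (hs : ex_series x)
  (hnoninc : forall n, x (S n) <= x n) (hfill : interval_filling x) n : x n <= T x n.
Proof.
  apply Rnot_lt_le. intro Hlt.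
  pose proof (T_nonneg x hpos hs n) as HT0.
  set (c := (x n + T x n) / 2).
  assert (HA : achievement_set x c).
  { apply hfill with 0 (Series x).
    - exists (fun _ => false). apply rep_zero.
    - exists (fun _ => true). unfold represents.
      apply is_series_ext with x. intro; reflexivity. apply Series_correct; auto.
    - split. unfold c; lra.
      assert (x n <= sum_n x n) by (apply term_le_sum; intro; left; auto).
      assert (sum_n x n <= Series x) by (apply psum_le; [intro; left; auto | apply Series_correct; auto]).
      unfold c; lra. }
  destruct HA as [e He].
  assert (Hnn : forall i, 0 <= subseries x e i).
  { intro i. unfold subseries. destruct (e i). left; auto. lra. }
  destruct (classic (exists i, (i <= n)%nat /\ e i = true)) as [[i [Hi Hei]] | Hno].
  - assert (subseries x e i <= c).
    { eapply Rle_trans. apply term_le_sum; auto. apply psum_le; auto. }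
    unfold subseries in H. rewrite Hei in H.
    pose proof (noninc_le x hnoninc i n Hi). unfold c in *; lra.
  - assert (Z : forall i, (i <= n)%nat -> sum_n (subseries x e) i = 0).
    { induction i; intros.
      - rewrite sum_O. unfold subseries. destruct (e 0%nat) eqn:E. exfalso; apply Hno; exists 0%nat; split; auto; lia. reflexivity.
      - rewrite sum_Sn, IHi by lia. unfold subseries. destruct (e (S i)) eqn:E.
        exfalso; apply Hno; exists (S i); split; auto. change (0 + 0 = 0). ring. }
    assert (B : forall N, (n <= N)%nat -> sum_n (subseries x e) N <= sum_n x N - sum_n x n).
    { induction 1. rewrite Z by lia. lra. rewrite !sum_Sn.
      change (sum_n (subseries x e) m + subseries x e (S m) <= sum_n x m + x (S m) - sum_n x n).
      assert (subseries x e (S m) <= x (S m)). unfold subseries. destruct (e (S m)). lra. left; auto.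
      lra. }
    assert (L := is_lim_seq_le_loc _ _ c (Series x - sum_n x n) (ltac:(exists n; exact B)) (ser_lim _ _ He)
      (is_lim_seq_minus' _ _ _ _ (ser_lim _ _ (Series_correct _ hs)) (is_lim_seq_const (sum_n x n)))).
    simpl in L. unfold c, T in *. lra.
Qed.

Theorem lemma3p7 (x : nat -> R)
  (hpos : forall n, 0 < x n)
  (hsum : ex_series x)
  (hnoninc : forall n, x (S n) <= x n)
  (hfill : interval_filling x)
  (hk : exists k, tail_sum x k > x k) :
  exists y, achievement_set x y /\
    exists e1 e2 e3 : nat -> bool,
      represents x e1 y /\ represents x e2 y /\ represents x e3 y /\
      e1 <> e2 /\ e1 <> e3 /\ e2 <> e3.
Proof.
  destruct hk as [k hk]. rewrite tail_eq in hk by auto.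
  pose proof (kakeya x hpos hsum hnoninc hfill) as Kak.
  assert (Hd : 0 < T x k - x k) by lra.
  pose proof (ex_series_lim_0 x hsum) as L0. apply is_lim_seq_spec in L0.
  destruct (L0 (mkposreal _ Hd)) as [N HN]. simpl in HN.
  set (n := S (max N k)).
  assert (Hn : x n < T x k - x k).
  { specialize (HN n ltac:(unfold n; lia)). rewrite Rminus_0_r in HN.
    pose proof (hpos n). rewrite Rabs_pos_eq in HN; lra. }
  assert (Hkn : (k < n)%nat) by (unfold n; lia).
  set (y := x k + x n).
  destruct (greedy x hpos hsum Kak k y) as [R3 L3].
  { pose proof (hpos k); pose proof (hpos n). unfold y; lra. }
  destruct (greedy x hpos hsum Kak n (x n)) as [RB LB].
  { pose proof (hpos n). split; [lra | apply Kak]. }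
  set (e1 := upd (upd (fun _ => false) n) k).
  set (e2 := upd (gr x n (x n)) k).
  set (e3 := gr x k y).
  assert (R1 : represents x e1 y).
  { unfold e1, y. replace (x k + x n) with (0 + x n + x k) by ring.
    apply rep_upd. apply rep_upd. apply rep_zero. reflexivity.
    unfold upd. destruct (Nat.eqb_spec k n). lia. reflexivity. }
  assert (R2 : represents x e2 y).
  { unfold e2, y. rewrite Rplus_comm. apply rep_upd; auto. apply LB. lia. }
  assert (A1 : e1 n = true). { unfold e1, upd. destruct (Nat.eqb_spec n k). lia. rewrite Nat.eqb_refl. reflexivity. }
  assert (A2 : e2 n = false). { unfold e2, upd. destruct (Nat.eqb_spec n k). lia. apply LB. lia. }
  assert (B1 : e1 k = true). { unfold e1, upd. rewrite Nat.eqb_refl. reflexivity. }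
  assert (B2 : e2 k = true). { unfold e2, upd. rewrite Nat.eqb_refl. reflexivity. }
  assert (B3 : e3 k = false). { unfold e3. apply L3. lia. }
  exists y. split. exists e3; exact R3.
  exists e1, e2, e3. repeat split; auto.
  - intro E. rewrite E in A1. congruence.
  - intro E. rewrite E in B1. congruence.
  - intro E. rewrite E in B2. congruence.
Qed.
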